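(* Let $\Pi=\Pi_1\times\cdots\times\Pi_T$ be a class of dynamic treatment regimes such that for every $t=1,\dots,T$, $N_{d_h}(\epsilon,\Pi_t)\le C\exp(D(1/\epsilon)^\omega)$ for all $\epsilon>0$, for some constants $C,D>0$ and $0<\omega<0.5$. Then $\kappa(\Pi)<\infty$.
   Context: For each stage $t$, $\mathcal{H}_t$ is a history space whose elements are $h_t=(\underline a_{t-1},\underline s_t)$, and for $\ell\le t$ the sub-history $h_\ell=(\underline a_{\ell-1},\underline s_\ell)\in\mathcal{H}_\ell$. $\Pi_t$ is a class of measurable maps $\pi_t:\mathcal{H}_t\to\mathcal{A}_t$ (finite action set); $\Pi_{s:t}=\Pi_s\times\cdots\times\Pi_t$ with elements $\pi_{s:t}=(\pi_s,\dots,\pi_t)$, and $\Pi=\Pi_{1:T}$. Given points $h_t^{(1)},\dots,h_t^{(n)}\in\mathcal{H}_t$, the Hamming distance is $d_h(\pi_{s:t},\pi'_{s:t})=n^{-1}\sum_{i=1}^n\mathbf{1}\{\pi_s(h_s^{(i)})\ne\pi'_s(h_s^{(i)})\vee\cdots\vee\pi_t(h_t^{(i)})\ne\pi'_t(h_t^{(i)})\}$; $N_{d_h}(\epsilon,\Pi_{s:t},\{h_t^{(i)}\})$ is the smallest number of elements of $\Pi_{s:t}$ such that every element of $\Pi_{s:t}$ is within $d_h$-distance $\epsilon$ of one of them; $N_{d_h}(\epsilon,\Pi_{s:t})$ is the supremum of this over all $n\ge1$ and all $h_t^{(1)},\dots,h_t^{(n)}\in\mathcal{H}_t$. The entropy integral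 is $\kappa(\Pi_{s:t})=\int_0^1\sqrt{\log N_{d_h}(\epsilon^2,\Pi_{s:t})}\,d\epsilon$ and $\kappa(\Pi)=\kappa(\Pi_{1:T})$. *)

(* Defs.v *)
From HB Require Import structures.
From mathcomp Require Import all_boot all_order all_algebra.
From mathcomp Require Import all_classical all_reals all_analysis.
Set Implicit Arguments. Unset Strict Implicit. Unset Printing Implicit Defensive.
Import Order.TTheory GRing.Theory Num.Theory.
Import numFieldNormedType.Exports.
Local Open Scope classical_set_scope.
Local Open Scope ring_scope.

Section DTR.
Variable R : realType.
Variables (S : nat -> Type) (A : nat -> finType).

(* History space H_t : h_t = (a_1..a_{t-1}, s_1..s_t).
   Component k (0-based) of the first part is a_{k+1}, of the second s_{k+1}. *)
Definition hist (t : nat) : Type :=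
  ((forall k : 'I_t.-1, A k.+1) * (forall k : 'I_t, S k.+1))%type.

Lemma predn_leq (l t : nat) : (l <= t)%N -> (l.-1 <= t.-1)%N.
Proof. by move=> h; rewrite -!subn1 leq_sub2r. Qed.

Definition hsub (l t : nat) (hle : (l <= t)%N) (h : hist t) : hist l :=
  (fun k => h.1 (widen_ord (predn_leq hle) k), fun k => h.2 (widen_ord hle k)).

Definition regime (s t : nat) : Type :=
  forall l : nat, (s <= l <= t)%N -> hist l -> A l.

Definition Pi_range (Pi : forall t, set (hist t -> A t)) (s t : nat)
  : set (regime s t) :=
  [set pi | forall l (H : (s <= l <= t)%N), Pi l (pi l H)].

Lemma range_le (s l t : nat) : (s <= l <= t)%N -> (l <= t)%N.
Proof. by case/andP. Qed.

Definition dh (s t n : nat) (pts : 'I_n -> hist t) (pi pi' : regime s t) : R :=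
  (n%:R)^-1 * \sum_(i < n)
    (`[< exists l (H : (s <= l <= t)%N),
          pi l H (hsub (range_le H) (pts i)) <>
          pi' l H (hsub (range_le H) (pts i)) >] : nat)%:R.

(* N_{d_h}(eps, Pi_{s:t}, {h_t^(i)}) : smallest number k of elements
   c_1..c_k of Pi_{s:t} forming an eps-cover (+oo if there is none) *)
Definition cover_num_pts (Pi : forall t, set (hist t -> A t)) (s t : nat)
  (eps : R) (n : nat) (pts : 'I_n -> hist t) : \bar R :=
  ereal_inf [set (k%:R)%:E | k in
    [set k : nat | exists c : 'I_k -> regime s t,
       (forall j, Pi_range Pi (c j)) /\
       (forall pi, Pi_range Pi pi -> exists j, dh pts pi (c j) <= eps)]].

Definition cover_num (Pi : forall t, set (hist t -> A t)) (s t : nat) (eps : R)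
  : \bar R :=
  ereal_sup [set x | exists (n : nat) (pts : 'I_n -> hist t),
                      (0 < n)%N /\ x = @cover_num_pts Pi s t eps n pts].

Definition sqrt_log (x : \bar R) : \bar R :=
  match x with
  | r%:E => (Num.sqrt (ln r))%:E
  | +oo%E => +oo%E
  | -oo%E => 0%E
  end.

Definition kappa (Pi : forall t, set (hist t -> A t)) (s t : nat) : \bar R :=
  (\int[@lebesgue_measure R]_(e in `[0%R, 1%R]) sqrt_log (@cover_num Pi s t (e ^+ 2)))%E.

End DTR.

(* Main.v *)
Require Import Defs.
From HB Require Import structures.
From mathcomp Require Import all_boot all_order all_algebra.
From mathcomp Require Import all_classical all_reals all_analysis.
From mathcomp Require Import measurable_realfun lra.
Import Order.TTheory GRing.Theory Num.Theory.
Import numFieldNormedType.Exports.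
Local Open Scope classical_set_scope.
Local Open Scope ring_scope.



Lemma ord_dep m (P : nat -> Type) (F : forall j : 'I_m, P j) i (p q : (i < m)%N) :
  F (Ordinal p) = F (Ordinal q).
Proof. by rewrite (eq_irrelevance p q). Qed.

Lemma hsubK {S : nat -> Type} {A : nat -> finType} {l t u} (h1 : (l <= t)%N) (h2 : (t <= u)%N) (h3 : (l <= u)%N)
  (x : hist S A u) : hsub h1 (hsub h2 x) = hsub h3 x.
Proof.
rewrite /hsub /=; f_equal; apply: functional_extensionality_dep => k /=;
  rewrite /widen_ord /=.
  exact: (@ord_dep _ (fun j => A j.+1) x.1).
exact: (@ord_dep _ (fun j => S j.+1) x.2).
Qed.

Lemma sub_range {t l T} : (1 <= t <= T)%N -> (t <= l <= t)%N -> (1 <= l <= T)%N.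
Proof.
move=> /andP[a b] /andP[c d]; apply/andP; split.
  exact: leq_trans c.
exact: leq_trans b.
Qed.

Lemma lll l : (l <= l <= l)%N.
Proof. by rewrite leqnn. Qed.

Lemma lpred {l T} : (1 <= l <= T)%N -> (l.-1 < T)%N.
Proof. by case/andP; case: l. Qed.

Lemma Ht_of {T} (i : 'I_T) : (1 <= i.+1 <= T)%N.
Proof. by rewrite /= ltn_ord. Qed.

Lemma cover_prod (R : realType) {S : nat -> Type} {A : nat -> finType}
  (Pi : forall t : nat, set (hist S A t -> A t)) (T K : nat) (e : R) : 0 <= e ->
  (forall t, (1 <= t <= T)%N -> forall n (pts : 'I_n -> hist S A t), (0 < n)%N ->
     exists k, (k <= K)%N /\ exists c : 'I_k -> regime S A t t,
       (forall j, Pi_range Pi (c j)) /\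
       (forall pi, Pi_range Pi pi -> exists j, dh R pts pi (c j) <= e / T%:R)) ->
  forall n (pts : 'I_n -> hist S A T), (0 < n)%N ->
  (cover_num_pts Pi 1 e pts <= ((K ^ T)%:R)%:E)%E.
Proof.
move=> e0 Hc n pts n0.
have [[pi0 Hpi0]|nopi] :=
  pselect (exists pi0 : regime S A 1 T, Pi_range Pi pi0); last first.
  apply: (@le_trans _ _ ((0%:R)%:E)); last by rewrite lee_fin ler0n.
  apply: ereal_inf_lbound; exists 0%N => //.
  have c0 : 'I_0 -> regime S A 1 T by case=> m; rewrite ltn0.
  exists c0; split; first by case.
  by move=> pi Hpi; exfalso; apply: nopi; exists pi.
have fex : forall t (Ht : (1 <= t <= T)%N), {f : nat -> regime S A t t |
   (forall j, Pi_range Pi (f j)) /\ forall pi, Pi_range Pi pi -> exists j,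
     (j < K)%N /\ dh R (fun i => hsub (range_le Ht) (pts i)) pi (f j) <= e / T%:R}.
  move=> t Ht; apply: cid.
  have [k [kK [c [cP ccov]]]] := Hc t Ht n (fun i => hsub (range_le Ht) (pts i)) n0.
  have [j0 _] := ccov (fun l Hl => pi0 l (sub_range Ht Hl))
     (fun l Hl => Hpi0 l (sub_range Ht Hl)).
  move: c cP ccov j0; case: k kK => [|k] kK c cP ccov j0; first by case: j0.
  exists (fun j => c (inord j)); split; first by move=> j; exact: cP.
  move=> pi Hpi; have [j Hj] := ccov pi Hpi; exists j; split.
    exact: leq_trans (ltn_ord j) kK.
  by rewrite inord_val.
pose f t Ht := proj1_sig (fex t Ht).
have fE : forall t1 t2 (H1 : (1 <= t1 <= T)%N) (H2 : (1 <= t2 <= T)%N) j l L1 L2 y,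
    t1 = t2 -> f t1 H1 j l L1 y = f t2 H2 j l L2 y.
  move=> t1 t2 H1 H2 j l L1 L2 y E; subst t2.
  by rewrite (eq_irrelevance H1 H2) (eq_irrelevance L1 L2).
pose c (J : {ffun 'I_T -> 'I_K}) : regime S A 1 T :=
  fun l H => f l H (J (Ordinal (lpred H))) l (lll l).
pose cc (i : 'I_#|{ffun 'I_T -> 'I_K}|) := c (enum_val i).
apply: (@le_trans _ _ ((#|{ffun 'I_T -> 'I_K}|%:R)%:E)); last first.
  by rewrite card_ffun !card_ord.
apply: ereal_inf_lbound; exists #|{ffun 'I_T -> 'I_K}| => //.
exists cc; split.
  move=> i l H; rewrite /cc /c.
  exact: (proj1 (proj2_sig (fex l H)) _ l (lll l)).
move=> pi Hpi.
have Hj : forall i : 'I_T, exists j : 'I_K,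
   dh R (fun m => hsub (range_le (Ht_of i)) (pts m))
     (fun l Hl => pi l (sub_range (Ht_of i) Hl)) (f i.+1 (Ht_of i) j) <= e / T%:R.
  move=> i; have [j [jK Hj]] := (proj2 (proj2_sig (fex i.+1 (Ht_of i))))
     _ (fun l Hl => Hpi l (sub_range (Ht_of i) Hl)).
  by exists (Ordinal jK).
case: (choice Hj) => g Hg.
exists (enum_rank [ffun i => g i]); rewrite /cc enum_rankK.
set J := [ffun i => g i].
have H1 : dh R pts pi (c J) <= \sum_(i < T) dh R
    (fun m => hsub (range_le (Ht_of i)) (pts m))
    (fun l Hl => pi l (sub_range (Ht_of i) Hl)) (f i.+1 (Ht_of i) (J i)).
  rewrite /dh -mulr_sumr exchange_big /=.
  apply: ler_wpM2l; first by rewrite invr_ge0 ler0n.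
  apply: ler_sum => m _.
  case: asboolP => [[l [H Hne]]|_]; last by apply: sumr_ge0 => i _; exact: ler0n.
  pose m0 : 'I_T := Ordinal (lpred H).
  have E : m0.+1 = l by rewrite /= prednK //; case/andP: (H).
  rewrite (bigD1 m0) //=.
  case: asboolP => [_|Hn]; first by rewrite lerDl; apply: sumr_ge0 => i _; exact: ler0n.
  exfalso; apply: Hn.
  have H' : (m0.+1 <= l <= m0.+1)%N by rewrite E lll.
  exists l, H' => Heq; apply: Hne; rewrite /c.
  rewrite !(hsubK _ _ (range_le H)) in Heq.
  rewrite (eq_irrelevance (sub_range _ _) H) in Heq.
  rewrite Heq; exact: fE.
apply: (le_trans H1).
under eq_bigr do rewrite ffunE.
apply: le_trans (ler_sum _ (fun i _ => Hg i)) _.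
rewrite sumr_const card_ord.
case: T {Hc fex f fE c cc Hj g Hg J H1 pts pi0 Hpi0 Hpi pi} => [|T].
  by rewrite mulr0n.
by rewrite -(mulr_natr (e / T.+1%:R)) divfK // pnatr_eq0.
Qed.


Lemma cover_num_bound (R : realType) {S : nat -> Type} {A : nat -> finType}
  (Pi : forall t : nat, set (hist S A t -> A t)) (T : nat) (C D omega : R) : 0 < C ->
  (forall t, (1 <= t <= T)%N -> forall eps : R, 0 < eps ->
     (cover_num Pi t t eps <= (C * expR (D * eps^-1 `^ omega))%:E)%E) ->
  forall e : R, 0 < e ->
  (cover_num Pi 1 T e <=
     (((C * expR (D * (e / T%:R)^-1 `^ omega)) + 1) ^+ T)%:E)%E.
Proof.
move=> C0 hyp e e0.
set b := C * expR _.
have b0 : 0 <= b + 1 by rewrite addr_ge0 // mulr_ge0 // ?ltW // expR_ge0.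
apply: ge_ereal_sup => _ [n [pts [n0 ->]]].
apply: le_trans (@cover_prod R S A Pi T (Num.truncn (b+1)) e (ltW e0) _ n pts n0) _.
  move=> t Ht m ptm m0.
  have T0 : (0 < T)%N by case/andP: Ht => a c; exact: leq_trans a c.
  have T0' : (0 : R) < T%:R by rewrite ltr0n.
  have H := hyp t Ht (e / T%:R) (divr_gt0 e0 T0').
  have : (cover_num_pts Pi t (e / T%:R) ptm < (b+1)%:E)%E.
    apply: (@le_lt_trans _ _ (cover_num Pi t t (e / T%:R))).
      by apply: ereal_sup_ubound; exists m, ptm.
    by apply: le_lt_trans H _; rewrite lte_fin ltrDl ltr01.
  move=> /ereal_inf_lt [y [k [c Hc'] <-] kb].
  exists k; split; last by exists c.
  by rewrite truncn_ge_nat //; rewrite lte_fin in kb; exact: ltW.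
rewrite lee_fin natrX; apply: lerXn2r => //; rewrite ?nnegrE ?ler0n //.
by rewrite truncn_le.
Qed.




Lemma sqrt_log_ge0 {R : realType} (x : \bar R) : (0 <= sqrt_log x)%E.
Proof.
case: x => [r| |] /=; [by rewrite lee_fin sqrtr_ge0 | exact: le0y | exact: lexx].
Qed.

Lemma sqrt_log_le {R : realType} (x : \bar R) (M : R) : 1 <= M ->
  (x <= M%:E)%E -> (sqrt_log x <= (Num.sqrt (ln M))%:E)%E.
Proof.
move=> M1; case: x => [r| |] /= Hr.
- rewrite lee_fin in Hr; rewrite lee_fin ler_sqrt ?ln_ge0 //.
  have [r0|r0] := lerP r 0; first by rewrite ln0 // ln_ge0.
  by rewrite ler_ln // posrE // (lt_le_trans ltr01 M1).
- by [].
- by rewrite lee_fin sqrtr_ge0.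
Qed.

Lemma ln_bound {R : realType} (T : nat) (C D omega e : R) :
  0 < C -> 0 < D -> 0 < omega -> omega < 1 / 2 -> 0 < e -> e <= 1 ->
  ln ((C * expR (D * (e ^+ 2 / T%:R)^-1 `^ omega) + 1) ^+ T) <=
  (T%:R * ln (C + 1) + D * T%:R ^+ 2) / e.
Proof.
move=> C0 D0 w0 w12 e0 e1.
set X := D * _.
have X0 : 0 <= X by apply: mulr_ge0; [exact: ltW | exact: powR_ge0].
have E1 : 1 <= expR X by rewrite -expR0 ler_expR.
have bpos : 0 < C * expR X + 1 by have := expR_gt0 X; nra.
rewrite lnXn // -(mulr_natr (ln _)).
have L1 : ln (C * expR X + 1) <= ln (C + 1) + X.
  have -> : ln (C + 1) + X = ln ((C + 1) * expR X).
    by rewrite lnM ?posrE ?expR_gt0 ?addr_gt0 // expRK.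
  rewrite ler_ln ?posrE //; try (have := expR_gt0 X; nra).
have L0 : 0 <= ln (C + 1) by rewrite ln_ge0 // lerDr ltW.
case: T => [|T] in X X0 E1 bpos L1 *.
  by rewrite mulr0 mul0r expr0n /= mulr0 addr0 mul0r.
have T1 : (1 : R) <= T.+1%:R by rewrite ler1n.
have XT : X <= D * T.+1%:R / e.
  rewrite /X -mulrA; apply: ler_wpM2l; first exact: ltW.
  rewrite invf_div.
  have y1 : 1 <= T.+1%:R / e ^+ 2.
    rewrite ler_pdivlMr ?exprn_gt0 // mul1r.
    by apply: (le_trans _ T1); rewrite expr_le1 // ltW.
  apply: (le_trans (ler_powR y1 (ltW w12))); rewrite div1r.
  rewrite powR12_sqrt ?(le_trans ler01 y1) //.
  rewrite -[X in _ <= X]gtr0_norm ?divr_gt0 ?ltr0n // -sqrtr_sqr.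
  rewrite ler_sqrt ?sqr_ge0 // expr_div_n ler_pM2r ?invr_gt0 ?exprn_gt0 //.
  by rewrite expr2 ler_peMr // ?ler0n.
have ei : 1 <= e^-1 by rewrite invf_ge1.
have ee : e * e^-1 = 1 by rewrite divff // gt_eqF.
have XT' : X <= D * T.+1%:R * e^-1 by [].
set L := ln (C + 1) in L1 L0 *.
set t := T.+1%:R in T1 XT XT' *.
set ln1 := ln _ in L1 *.
have h1 : ln1 * t <= (L + X) * t by apply: ler_wpM2r => //; exact: le_trans T1.
have h2 : X * t <= D * t * e^-1 * t by apply: ler_wpM2r => //; exact: le_trans T1.
have h3 : L * t <= L * t * e^-1.
  by apply: ler_peMr => //; apply: mulr_ge0 => //; exact: le_trans T1.
rewrite mulrDl.
lra.
Qed.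


Import HBNNSimple.
Local Notation mu := (@lebesgue_measure _).

Lemma le_integral_nm {R : realType} (D : set R) (mD : measurable D) (r : R) (f h : R -> \bar R) :
  (forall x, (0 <= f x)%E) -> measurable_fun (D `\ r) h ->
  (forall x, (D `\ r) x -> (f x <= h x)%E) ->
  (\int[mu]_(x in D) f x <= \int[mu]_(x in D `\ r) h x)%E.
Proof.
move=> f0 mh fh.
have mDr : measurable (D `\ r) by apply: measurableD.
have mT : measurable (setT `\ r : set R) by apply: measurableD.
have h0 : forall x, (D `\ r) x -> (0 <= h x)%E.
  by move=> x Hx; exact: le_trans (f0 x) (fh x Hx).
rewrite ge0_integralE //.
apply: ge_ereal_sup => _ [k Hk <-].
rewrite -integralT_nnsfun.
have mk : measurable_fun setT (fun x => (k x)%:E).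
  exact/measurable_EFinP/measurable_funPT.
rewrite -(@integral_setD1 _ (fun x => (k x)%:E) r setT) //; last exact: (measurable_funS measurableT (@subsetT _ _) mk).
have mhr := (measurable_restrictT _ mDr).1 mh.
rewrite [X in (_ <= X)%E]integral_mkcond -(@integral_setD1 _ _ r setT) //; last first.
  exact: (measurable_funS measurableT (@subsetT _ _) mhr).
apply: ge0_le_integral => //.
- by move=> x _; rewrite lee_fin fun_ge0.
- exact: (measurable_funS measurableT (@subsetT _ _) mk).
- exact: (measurable_funS measurableT (@subsetT _ _) mhr).
move=> x [_ xr]; have := Hk x; rewrite !patchE.
case: ifPn => [/set_mem Dx|Dx].
  rewrite ifT; last by apply/mem_set; split.
  by move=> kf; apply: le_trans kf (fh x _); split.
rewrite ifF //; apply/negbTE; apply: contra Dx => /set_mem [].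
by move=> Dx' _; exact/mem_set.
Qed.


Lemma int_sqrt {R : realType} (g : R) : 0 <= g ->
  (\int[mu]_(x in `]0%R, 1%R]) (g * (Num.sqrt x)^-1)%:E <= (2 * g)%:E)%E.
Proof.
move=> g0.
pose G x := g * (Num.sqrt x)^-1.
have cG : {in `]0%R, +oo[, continuous G}.
  move=> x; rewrite in_itv /= andbT => x0.
  rewrite /G; apply: (@continuousM _ _ (fun=> g) (fun x => (Num.sqrt x)^-1)).
    exact: cst_continuous.
  apply: continuousV; first by rewrite gt_eqF // sqrtr_gt0.
  exact: sqrt_continuous.
have mG : measurable_fun (`]0%R, +oo[ : set R) G.
  apply: open_continuous_measurable_fun; first exact: interval_open.
  by move=> x /set_mem /= xin; exact: cG.
pose F (i : nat) : set (measurableTypeR R) := (`[(i.+2%:R)^-1, 1%R])%classic.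
have Fsub i : F i `<=` `]0%R, +oo[.
  move=> x; rewrite /F /= !in_itv /= andbT => /andP[ax _]; rewrite ?bnd_simp in ax.
  by apply: lt_le_trans ax; rewrite invr_gt0 ltr0n.
have mFG i : measurable_fun (F i) (EFin \o G : measurableTypeR R -> \bar R).
  apply/measurable_EFinP.
  have := (measurable_funS (measurable_itv _) (Fsub i) mG).
  exact.
have FU : \bigcup_i F i = (`]0%R, 1%R])%classic.
  apply/seteqP; split => x.
    move=> [i _ /=]; rewrite !in_itv /= => /andP[ax x1]; rewrite ?bnd_simp in ax x1.
    rewrite x1 andbT.
    by apply: lt_le_trans ax; rewrite invr_gt0 ltr0n.
  rewrite /= in_itv /= => /andP[x0 x1].
  exists (Num.truncn x^-1) => //; rewrite /F /= in_itv /= x1 andbT.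
  rewrite invf_ple ?posrE ?ltr0n //.
  apply: le_trans (ltW (truncnS_gt x^-1)) _.
  by rewrite ler_nat.
have nd : {homo F : n m / (n <= m)%N >-> (n <= m)%O}.
  move=> n m nm; rewrite subsetEset => x; rewrite /F /= !in_itv /= => /andP[ax x1].
  rewrite x1 andbT; apply: le_trans ax.
  by rewrite lef_pV2 ?posrE ?ltr0n // ler_nat.
have f0 : forall i x, F i x -> (0 <= (EFin \o G) x)%E.
  by move=> i x _; rewrite lee_fin /G mulr_ge0 // invr_ge0 sqrtr_ge0.
have Hc := @ge0_nondecreasing_set_cvg_integral _ _ _ F (EFin \o G) mu nd
  (fun i => measurable_itv _) mFG f0.
rewrite FU in Hc.
rewrite -(cvg_lim _ Hc) //.
apply: lime_le; first by apply/cvg_ex; eexists; exact: Hc.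
apply: nearW => i.
pose Fp := (2 * g) \*: (@Num.sqrt R).
have a0 : 0 < (i.+2%:R : R)^-1 by rewrite invr_gt0 ltr0n.
have a1 : (i.+2%:R : R)^-1 < 1 by rewrite invf_lt1 ?ltr0n // ltr1n.
rewrite /F (@continuous_FTC2 _ G Fp) //.
- rewrite -EFinB lee_fin /Fp /= sqrtr1 /GRing.scale /= mulr1 gerBl.
  by rewrite mulr_ge0 // ?sqrtr_ge0 // mulr_ge0.
- apply: continuous_in_subspaceT => x; rewrite inE /= in_itv /= => /andP[ax _].
  by apply: cG; rewrite in_itv /= andbT (lt_le_trans a0 ax).
- split.
  + move=> x; rewrite in_itv /= => /andP[ax _].
    apply: ex_derive; apply: is_deriveZ; apply: is_derive1_sqrt.
    exact: lt_trans ax.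
  + by apply: cvg_at_right_filter; apply: cvgZr; exact: sqrt_continuous.
  + by apply: cvg_at_left_filter; apply: cvgZr; exact: sqrt_continuous.
- move=> x; rewrite in_itv /= => /andP[ax _].
  have x0 : 0 < x by exact: lt_trans ax.
  have Dx := is_deriveZ (2 * g) (is_derive1_sqrt x0).
  rewrite derive1E (@derive_val _ _ _ _ _ _ _ Dx) /G.
  rewrite /GRing.scale /= invfM mulrA -(mulrA 2) (mulrC g) mulrA divff ?mul1r //.
Qed.


Lemma int_bound {R : realType} (f : R -> \bar R) (g : R) : 0 <= g -> (forall x, (0 <= f x)%E) ->
  (forall x, 0 < x <= 1 -> (f x <= (g * (Num.sqrt x)^-1)%:E)%E) ->
  (\int[mu]_(x in `[0%R, 1%R]) f x < +oo)%E.
Proof.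
move=> g0 f0 fb.
apply: (@le_lt_trans _ _ (2 * g)%:E); last exact: ltry.
apply: (le_trans _ (int_sqrt g g0)).
rewrite -(setDitv1l (BRight (1:R)) 0 true).
apply: le_integral_nm => //.
- apply/measurable_EFinP.
  have mG : measurable_fun (`]0%R, +oo[ : set R) (fun x : R => g * (Num.sqrt x)^-1).
    apply: open_continuous_measurable_fun; first exact: interval_open.
    move=> x /set_mem /=; rewrite in_itv /= andbT => x0.
    apply: (@continuousM _ _ (fun=> g) (fun x => (Num.sqrt x)^-1)).
      exact: cst_continuous.
    apply: continuousV; first by rewrite gt_eqF // sqrtr_gt0.
    exact: sqrt_continuous.
  have := measurable_funS (measurable_itv _) _ mG; apply.
  move=> x [] /=; rewrite !in_itv /= => /andP[x0 x1] xn0.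
  by rewrite andbT lt_def x0 andbT; apply/eqP.
- move=> x [] /=; rewrite !in_itv /= => /andP[x0 x1] xn0; apply: fb.
  by rewrite x1 andbT lt_def x0 andbT; apply/eqP.
Qed.



Theorem lemma2 (R : realType) (T : nat) (S : nat -> Type) (A : nat -> finType)
  (Pi : forall t : nat, set (hist S A t -> A t)) (C D omega : R) :
  0 < C -> 0 < D -> 0 < omega -> omega < 1 / 2 ->
  (forall t : nat, (1 <= t <= T)%N ->
     forall eps : R, 0 < eps ->
       (cover_num Pi t t eps <= (C * expR (D * eps^-1 `^ omega))%:E)%E) ->
  (kappa R Pi 1 T < +oo)%E.
Proof.
move=> C0 D0 w0 w12 hyp.
pose c0 := T%:R * ln (C + 1) + D * T%:R ^+ 2.
have c00 : 0 <= c0.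
  have L0 : 0 <= ln (C + 1) by rewrite ln_ge0 // lerDr ltW.
  apply: addr_ge0; apply: mulr_ge0 => //; rewrite ?ler0n ?ltW ?sqr_ge0 //.
rewrite /kappa.
apply: (@int_bound R _ (Num.sqrt c0)); first exact: sqrtr_ge0.
  by move=> x; exact: sqrt_log_ge0.
move=> e /andP[e0 e1].
have e20 : 0 < e ^+ 2 by rewrite exprn_gt0.
have H := @cover_num_bound R S A Pi T C D omega C0 hyp _ e20.
have M1 : 1 <= (C * expR (D * (e ^+ 2 / T%:R)^-1 `^ omega) + 1) ^+ T.
  apply: exprn_ege1; rewrite lerDr; apply: mulr_ge0; [exact: ltW | exact: expR_ge0].
apply: le_trans (sqrt_log_le _ _ M1 H) _.
rewrite lee_fin.
apply: (@le_trans _ _ (Num.sqrt (c0 / e))).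
  rewrite ler_sqrt; last by apply: divr_ge0 => //; exact: ltW.
  exact: ln_bound.
by rewrite sqrtrM // sqrtrV // ltW.
Qed.
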